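(* For the class of equations $u_t=[E(x,u)u_x]_x+H(x,u)$ (with $E,H$ regarded as arbitrary smooth functions of $(x,u)$, i.e. as additional dependent variables subject to $E_t=H_t=0$), the Lie algebra of infinitesimal equivalence transformations of the form $$Y=\xi(t,x,u)\partial_t+\tau(t,x,u)\partial_x+\varphi(t,x,u)\partial_u+\chi(t,x,u,E,H)\partial_E+\eta(t,x,u,E,H)\partial_H$$ is spanned by $$Y_1=\partial_t,\quad Y_2=\partial_x,\quad Y_3=\partial_u,\quad Y_4=2t\,\partial_t+x\,\partial_x-2H\,\partial_H,$$ $$Y_5=-t\,\partial_t+E\,\partial_E+H\,\partial_H,\quad Y_6=u\,\partial_u+H\,\partial_H.$$
   Context: An equivalence transformation of the class is a non-degenerate point change of the variables $(t,x,u)$, together with a transformation of the arbitrary elements $E,H$, mapping every equation $u_t=[E(x,u)u_x]_x+H(x,u)$ of the class to an equation $\tilde u_{\tilde t}=[\tilde E(\tilde x,\tilde u)\tilde u_{\tilde x}]_{\tilde x}+\tilde H(\tilde x,\tilde u)$ of the same class. Infinitesimal equivalence transformations are the generators $Y$ as displayed whose appropriate prolongation leaves invariant the system $u_t=[Eu_x]_x+H$, $E_t=0$, $H_t=0$. *)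

(* Defs.v *)
From Stdlib Require Import Reals Lra List ClassicalEpsilon.
Open Scope R_scope.

(** Derivative at 0 of a real function (0 if it does not exist).
    It is only ever used on functions that are known to be differentiable. *)
Definition deriv0 (g : R -> R) : R :=
  match excluded_middle_informative (exists l, derivable_pt_lim g 0 l) with
  | left H => proj1_sig (constructive_indefinite_description _ H)
  | right _ => 0
  end.

Definition F3 := R -> R -> R -> R.

Definition pt (f : F3) : F3 := fun t x u => deriv0 (fun h => f (t + h) x u).
Definition px (f : F3) : F3 := fun t x u => deriv0 (fun h => f t (x + h) u).
Definition pu (f : F3) : F3 := fun t x u => deriv0 (fun h => f t x (u + h)).

Definition op3 (i : nat) (f : F3) : F3 :=
  match i with 0 => pt f | 1 => px f | _ => pu f end.
Definition iter3 (l : list nat) (f : F3) : F3 := fold_right op3 f l.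

Definition cont3 (g : F3) : Prop :=
  forall t x u eps, 0 < eps -> exists d, 0 < d /\
    forall t' x' u', Rabs (t' - t) < d -> Rabs (x' - x) < d -> Rabs (u' - u) < d ->
      Rabs (g t' x' u' - g t x u) < eps.

Definition smooth3 (f : F3) : Prop :=
  forall l : list nat, cont3 (iter3 l f) /\
    forall t x u,
      (exists a, derivable_pt_lim (fun h => iter3 l f (t + h) x u) 0 a) /\
      (exists a, derivable_pt_lim (fun h => iter3 l f t (x + h) u) 0 a) /\
      (exists a, derivable_pt_lim (fun h => iter3 l f t x (u + h)) 0 a).

Definition F5 := R -> R -> R -> R -> R -> R.

Definition qt (f : F5) : F5 := fun t x u E H => deriv0 (fun h => f (t + h) x u E H).
Definition qx (f : F5) : F5 := fun t x u E H => deriv0 (fun h => f t (x + h) u E H).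
Definition qu (f : F5) : F5 := fun t x u E H => deriv0 (fun h => f t x (u + h) E H).
Definition qE (f : F5) : F5 := fun t x u E H => deriv0 (fun h => f t x u (E + h) H).
Definition qH (f : F5) : F5 := fun t x u E H => deriv0 (fun h => f t x u E (H + h)).

Definition op5 (i : nat) (f : F5) : F5 :=
  match i with 0 => qt f | 1 => qx f | 2 => qu f | 3 => qE f | _ => qH f end.
Definition iter5 (l : list nat) (f : F5) : F5 := fold_right op5 f l.

Definition cont5 (g : F5) : Prop :=
  forall t x u E H eps, 0 < eps -> exists d, 0 < d /\
    forall t' x' u' E' H', Rabs (t' - t) < d -> Rabs (x' - x) < d -> Rabs (u' - u) < d ->
      Rabs (E' - E) < d -> Rabs (H' - H) < d ->
      Rabs (g t' x' u' E' H' - g t x u E H) < eps.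

Definition smooth5 (f : F5) : Prop :=
  forall l : list nat, cont5 (iter5 l f) /\
    forall t x u E H,
      (exists a, derivable_pt_lim (fun h => iter5 l f (t + h) x u E H) 0 a) /\
      (exists a, derivable_pt_lim (fun h => iter5 l f t (x + h) u E H) 0 a) /\
      (exists a, derivable_pt_lim (fun h => iter5 l f t x (u + h) E H) 0 a) /\
      (exists a, derivable_pt_lim (fun h => iter5 l f t x u (E + h) H) 0 a) /\
      (exists a, derivable_pt_lim (fun h => iter5 l f t x u E (H + h)) 0 a).

(** ----- Prolongation of
   Y = xi d_t + tau d_x + phi d_u + chi d_E + eta d_H -----
   Jet coordinates: u_t, u_x, u_tx, u_xx for u = u(t,x);
   E_t, E_x, E_u, H_t, H_x, H_u for the arbitrary elements E, H regarded
   as dependent variables of (t,x,u). *)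
Definition Dt3 (t x u ut : R) (g : F3) : R := pt g t x u + ut * pu g t x u.
Definition Dx3 (t x u ux : R) (g : F3) : R := px g t x u + ux * pu g t x u.
Definition Dxx3 (t x u ux uxx : R) (g : F3) : R :=
  px (px g) t x u + ux * (pu (px g) t x u + px (pu g) t x u)
  + ux ^ 2 * pu (pu g) t x u + uxx * pu g t x u.

Definition phi_t (xi tau phi : F3) (t x u ut ux : R) : R :=
  Dt3 t x u ut phi - ut * Dt3 t x u ut xi - ux * Dt3 t x u ut tau.
Definition phi_x (xi tau phi : F3) (t x u ut ux : R) : R :=
  Dx3 t x u ux phi - ut * Dx3 t x u ux xi - ux * Dx3 t x u ux tau.
Definition phi_xx (xi tau phi : F3) (t x u ut ux utx uxx : R) : R :=
  Dxx3 t x u ux uxx phi - 2 * utx * Dx3 t x u ux xi - ut * Dxx3 t x u ux uxx xi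
  - 2 * uxx * Dx3 t x u ux tau - ux * Dxx3 t x u ux uxx tau.

Definition chi_t (xi tau phi : F3) (chi : F5) (t x u E H Et Ex Eu Ht : R) : R :=
  qt chi t x u E H + Et * qE chi t x u E H + Ht * qH chi t x u E H
  - Et * pt xi t x u - Ex * pt tau t x u - Eu * pt phi t x u.
Definition chi_x (xi tau phi : F3) (chi : F5) (t x u E H Et Ex Eu Hx : R) : R :=
  qx chi t x u E H + Ex * qE chi t x u E H + Hx * qH chi t x u E H
  - Et * px xi t x u - Ex * px tau t x u - Eu * px phi t x u.
Definition chi_u (xi tau phi : F3) (chi : F5) (t x u E H Et Ex Eu Hu : R) : R :=
  qu chi t x u E H + Eu * qE chi t x u E H + Hu * qH chi t x u E H
  - Et * pu xi t x u - Ex * pu tau t x u - Eu * pu phi t x u.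
Definition eta_t (xi tau phi : F3) (eta : F5) (t x u E H Et Ht Hx Hu : R) : R :=
  qt eta t x u E H + Et * qE eta t x u E H + Ht * qH eta t x u E H
  - Ht * pt xi t x u - Hx * pt tau t x u - Hu * pt phi t x u.

(* pr Y applied to  u_t - E u_xx - E_x u_x - E_u u_x^2 - H
   (i.e. u_t - [E u_x]_x - H, with E_x, E_u partial derivatives of E) *)
Definition prY_main (xi tau phi : F3) (chi eta : F5)
    (t x u E H ut ux utx uxx Et Ex Eu Ht Hx Hu : R) : R :=
  phi_t xi tau phi t x u ut ux
  - (chi t x u E H * uxx + E * phi_xx xi tau phi t x u ut ux utx uxx
     + chi_x xi tau phi chi t x u E H Et Ex Eu Hx * ux
     + Ex * phi_x xi tau phi t x u ut ux
     + chi_u xi tau phi chi t x u E H Et Ex Eu Hu * ux ^ 2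
     + 2 * Eu * ux * phi_x xi tau phi t x u ut ux + eta t x u E H).

(** Infinitesimal invariance criterion for the system
      u_t = [E u_x]_x + H,  E_t = 0,  H_t = 0 :
    the prolonged Y annihilates each equation on the solution manifold. *)
Definition is_equiv_generator (xi tau phi : F3) (chi eta : F5) : Prop :=
  (forall t x u E H ux utx uxx Ex Eu Hx Hu,
     let ut := E * uxx + Ex * ux + Eu * ux ^ 2 + H in
     prY_main xi tau phi chi eta t x u E H ut ux utx uxx 0 Ex Eu 0 Hx Hu = 0) /\
  (forall t x u E H Ex Eu Hx Hu,
     chi_t xi tau phi chi t x u E H 0 Ex Eu 0 = 0 /\
     eta_t xi tau phi eta t x u E H 0 0 Hx Hu = 0).

(* Main.v *)
Require Import Defs.
From Stdlib Require Import Reals Lra Lia List ClassicalEpsilon FunctionalExtensionality.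
Open Scope R_scope.

Lemma deriv0_spec g : (exists a, derivable_pt_lim g 0 a) -> derivable_pt_lim g 0 (deriv0 g).
Proof.
  intro Hx. unfold deriv0. destruct excluded_middle_informative as [e|n].
  - exact (proj2_sig (constructive_indefinite_description _ e)).
  - contradiction.
Qed.

Lemma deriv0_unique g l : derivable_pt_lim g 0 l -> deriv0 g = l.
Proof.
  intro Hl. apply (uniqueness_limite g 0). apply deriv0_spec. eauto. exact Hl.
Qed.

Lemma deriv0_affine g a b : (forall h, g h = a + b * h) -> deriv0 g = b.
Proof.
  intro Hg. apply deriv0_unique. intros eps Heps. exists (mkposreal 1 Rlt_0_1).
  intros h Hh _. rewrite !Hg. replace ((a + b * (0 + h) - (a + b * 0)) / h - b) with 0
    by (field; auto). rewrite Rabs_R0; auto.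
Qed.

Lemma deriv0_const c : deriv0 (fun _ => c) = 0.
Proof. apply (deriv0_affine _ c 0). intros; ring. Qed.

Lemma shift_lim g s l : derivable_pt_lim (fun h => g (s+h)) 0 l -> derivable_pt_lim g s l.
Proof.
  intros Hl eps Heps. destruct (Hl eps Heps) as [d Hd]. exists d. intros h H1 H2.
  specialize (Hd h H1 H2). rewrite Rplus_0_l, Rplus_0_r in Hd. exact Hd.
Qed.

Lemma const_from g : (forall s, derivable_pt_lim g s 0) -> forall s, g s = g 0.
Proof.
  intros Hg s.
  pose (pr := fun x => exist (fun l => derivable_pt_lim g x l) 0 (Hg x) : derivable_pt g x).
  apply (null_derivative_1 g pr). intro x. apply derive_pt_eq_0. apply Hg.
Qed.

Lemma lin_from g c : (forall s, derivable_pt_lim g s c) -> forall s, g s = g 0 + c*s.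
Proof.
  intros Hg s.
  assert (K: forall s, derivable_pt_lim (fun s => g s - c * s) s 0).
  { intro x. replace 0 with (c - c * 1) by ring.
    apply (derivable_pt_lim_minus g (fun s => c * s)). apply Hg.
    apply derivable_pt_lim_scal. apply derivable_pt_lim_id. }
  pose proof (const_from _ K s). simpl in H. lra.
Qed.

Lemma dir_const g : (forall s, exists a, derivable_pt_lim (fun h => g (s+h)) 0 a) ->
  (forall s, deriv0 (fun h => g (s+h)) = 0) -> forall s, g s = g 0.
Proof.
  intros D Z. apply const_from. intro s. apply shift_lim.
  pose proof (deriv0_spec _ (D s)) as Hd. rewrite Z in Hd. exact Hd.
Qed.

Lemma dir_lin g c : (forall s, exists a, derivable_pt_lim (fun h => g (s+h)) 0 a) ->
  (forall s, deriv0 (fun h => g (s+h)) = c) -> forall s, g s = g 0 + c * s.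
Proof.
  intros D Z. apply lin_from. intro s. apply shift_lim.
  pose proof (deriv0_spec _ (D s)) as Hd. rewrite Z in Hd. exact Hd.
Qed.

Lemma deriv0_ext f g : (forall h, f h = g h) -> deriv0 f = deriv0 g.
Proof. intro H. f_equal. apply functional_extensionality. exact H. Qed.

Lemma d_indep (f : R -> R) c : (forall h, f h = c) -> deriv0 f = 0.
Proof. intro H. apply (deriv0_affine _ c). intro h. rewrite H. ring. Qed.

Lemma lim_aff g a p q : derivable_pt_lim g 0 a -> derivable_pt_lim (fun h => p * g h + q) 0 (p*a).
Proof.
  intro Hg. replace (p*a) with (p*a + 0) by ring.
  apply (derivable_pt_lim_plus (fun h => p * g h) (fun _ => q)).
  apply derivable_pt_lim_scal. exact Hg. apply derivable_pt_lim_const.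
Qed.

Definition aff3 a b c d : F3 := fun t x u => a + b*t + c*x + d*u.
Definition aff5 a b c d e f : F5 := fun t x u E H => a + b*t + c*x + d*u + e*E + f*H.

Lemma pt_aff3 a b c d : pt (aff3 a b c d) = aff3 b 0 0 0.
Proof. unfold pt. do 3 (apply functional_extensionality; intro).
  apply (deriv0_affine _ (aff3 a b c d x x0 x1)). intro; unfold aff3; ring. Qed.
Lemma px_aff3 a b c d : px (aff3 a b c d) = aff3 c 0 0 0.
Proof. unfold px. do 3 (apply functional_extensionality; intro).
  apply (deriv0_affine _ (aff3 a b c d x x0 x1)). intro; unfold aff3; ring. Qed.
Lemma pu_aff3 a b c d : pu (aff3 a b c d) = aff3 d 0 0 0.
Proof. unfold pu. do 3 (apply functional_extensionality; intro).
  apply (deriv0_affine _ (aff3 a b c d x x0 x1)). intro; unfold aff3; ring. Qed.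

Ltac fe5 := do 5 (apply functional_extensionality; intro).
Lemma qt_aff5 a b c d e f : qt (aff5 a b c d e f) = aff5 b 0 0 0 0 0.
Proof. unfold qt. fe5. apply (deriv0_affine _ (aff5 a b c d e f x x0 x1 x2 x3)). intro; unfold aff5; ring. Qed.
Lemma qx_aff5 a b c d e f : qx (aff5 a b c d e f) = aff5 c 0 0 0 0 0.
Proof. unfold qx. fe5. apply (deriv0_affine _ (aff5 a b c d e f x x0 x1 x2 x3)). intro; unfold aff5; ring. Qed.
Lemma qu_aff5 a b c d e f : qu (aff5 a b c d e f) = aff5 d 0 0 0 0 0.
Proof. unfold qu. fe5. apply (deriv0_affine _ (aff5 a b c d e f x x0 x1 x2 x3)). intro; unfold aff5; ring. Qed.
Lemma qE_aff5 a b c d e f : qE (aff5 a b c d e f) = aff5 e 0 0 0 0 0.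
Proof. unfold qE. fe5. apply (deriv0_affine _ (aff5 a b c d e f x x0 x1 x2 x3)). intro; unfold aff5; ring. Qed.
Lemma qH_aff5 a b c d e f : qH (aff5 a b c d e f) = aff5 f 0 0 0 0 0.
Proof. unfold qH. fe5. apply (deriv0_affine _ (aff5 a b c d e f x x0 x1 x2 x3)). intro; unfold aff5; ring. Qed.

Lemma backward (c1 c2 c3 c4 c5 c6 : R) :
  is_equiv_generator (aff3 c1 (2*c4 - c5) 0 0) (aff3 c2 0 c4 0) (aff3 c3 0 0 c6)
     (aff5 0 0 0 0 c5 0) (aff5 0 0 0 0 0 (-2*c4 + c5 + c6)).
Proof.
  unfold is_equiv_generator, prY_main, phi_t, phi_x, phi_xx, chi_x, chi_u, chi_t, eta_t,
    Dt3, Dx3, Dxx3.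
  rewrite ?pt_aff3, ?px_aff3, ?pu_aff3, ?qt_aff5, ?qx_aff5, ?qu_aff5, ?qE_aff5, ?qH_aff5.
  rewrite ?pt_aff3, ?px_aff3, ?pu_aff3.
  unfold aff3, aff5. split; intros; [cbv zeta; ring | split; ring].
Qed.

Lemma p0 (f : F3) : (forall t x u, f t x u = 0) ->
  forall t x u, px f t x u = 0 /\ pu f t x u = 0 /\ pt f t x u = 0.
Proof. intros H t x u. unfold px, pu, pt.
  repeat split; apply (d_indep _ 0); intro; apply H. Qed.

Ltac sp A := cbv zeta in A; unfold prY_main, phi_t, phi_x, phi_xx, chi_x, chi_u, Dt3, Dx3, Dxx3 in A.

Lemma forward xi tau phi chi eta :
    smooth3 xi -> smooth3 tau -> smooth3 phi -> smooth5 chi -> smooth5 eta ->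
    is_equiv_generator xi tau phi chi eta ->
     exists c1 c2 c3 c4 c5 c6 : R,
       (forall t x u, xi t x u = c1 + 2 * c4 * t - c5 * t) /\
       (forall t x u, tau t x u = c2 + c4 * x) /\
       (forall t x u, phi t x u = c3 + c6 * u) /\
       (forall t x u E H, chi t x u E H = c5 * E) /\
       (forall t x u E H, eta t x u E H = - 2 * c4 * H + c5 * H + c6 * H).
Proof.
  intros Sxi Stau Sphi Schi Seta [Hm Ha].
  assert (F1 : forall t x u E H, qt chi t x u E H = 0).
  { intros. destruct (Ha t x u E H 0 0 0 0) as [A _]. unfold chi_t in A. lra. }
  assert (F2 : forall t x u, pt tau t x u = 0).
  { intros. destruct (Ha t x u 0 0 0 0 0 0) as [A _]. destruct (Ha t x u 0 0 1 0 0 0) as [B _].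
    unfold chi_t in A, B. lra. }
  assert (F3 : forall t x u, pt phi t x u = 0).
  { intros. destruct (Ha t x u 0 0 0 0 0 0) as [A _]. destruct (Ha t x u 0 0 0 1 0 0) as [B _].
    unfold chi_t in A, B. lra. }
  assert (G1 : forall t x u, px xi t x u = 0).
  { intros. pose proof (Hm t x u 1 0 0 1 0 0 0 0 0) as A. pose proof (Hm t x u 1 0 0 0 0 0 0 0 0) as B.
    sp A. sp B. lra. }
  assert (G2 : forall t x u, pu xi t x u = 0).
  { intros. pose proof (Hm t x u 1 0 1 1 0 0 0 0 0) as A. pose proof (Hm t x u 1 0 1 0 0 0 0 0 0) as B.
    sp A. sp B. pose proof (G1 t x u). lra. }
  assert (XiF : forall t x u, xi t x u = xi t 0 0).
  { intros. rewrite (dir_const (fun s => xi t s u)); cycle 1.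
    - intro s. exact (proj1 (proj2 (proj2 (Sxi nil) t s u))).
    - intro s. exact (G1 t s u).
    - apply (dir_const (fun s => xi t 0 s)).
      + intro s. exact (proj2 (proj2 (proj2 (Sxi nil) t 0 s))).
      + intro s. exact (G2 t 0 s). }
  assert (G3a : forall t x u, px (px xi) t x u = 0) by (intros; apply (p0 _ G1)).
  assert (G3b : forall t x u, pu (px xi) t x u = 0) by (intros; apply (p0 _ G1)).
  assert (G3c : forall t x u, px (pu xi) t x u = 0) by (intros; apply (p0 _ G2)).
  assert (G3d : forall t x u, pu (pu xi) t x u = 0) by (intros; apply (p0 _ G2)).
  assert (G3e : forall t x u, pt xi t x u = pt xi t 0 0).
  { intros. unfold pt. apply deriv0_ext. intro. apply XiF. }
  assert (ChiF : forall t x u E H, chi t x u E H = E * (2 * px tau t x u - pt xi t x u)).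
  { intros. pose proof (Hm t x u E H 0 0 1 0 0 0 0) as A. pose proof (Hm t x u E H 0 0 0 0 0 0 0) as B.
    sp A. sp B. rewrite ?G1, ?G2, ?G3a, ?G3b, ?G3c, ?G3d, ?F2, ?F3 in A, B. lra. }
  assert (T1 : forall t x u, pu tau t x u = 0).
  { intros. pose proof (Hm t x u 1 0 1 0 1 0 0 0 0) as A. pose proof (Hm t x u 1 0 1 0 0 0 0 0 0) as B.
    sp A. sp B. rewrite ?G1, ?G2, ?G3a, ?G3b, ?G3c, ?G3d, ?F2, ?F3 in A, B.
    pose proof (ChiF t x u 1 0). lra. }
  assert (TauF : forall t x u, tau t x u = tau 0 x 0).
  { intros. rewrite (dir_const (fun s => tau s x u)); cycle 1.
    - intro s. exact (proj1 (proj2 (Stau nil) s x u)).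
    - intro s. exact (F2 s x u).
    - apply (dir_const (fun s => tau 0 x s)).
      + intro s. exact (proj2 (proj2 (proj2 (Stau nil) 0 x s))).
      + intro s. exact (T1 0 x s). }
  assert (TauP : forall t x u, px tau t x u = px tau 0 x 0).
  { intros. unfold px. apply deriv0_ext. intro. apply TauF. }
  assert (T2a : forall t x u, pu (px tau) t x u = 0).
  { intros. unfold pu. apply (d_indep _ (px tau 0 x 0)). intro. apply TauP. }
  assert (T2b : forall t x u, px (pu tau) t x u = 0) by (intros; apply (p0 _ T1)).
  assert (T2c : forall t x u, pu (pu tau) t x u = 0) by (intros; apply (p0 _ T1)).
  assert (P1 : forall t x u, px phi t x u = 0).
  { intros. pose proof (Hm t x u 0 0 0 0 0 1 0 0 0) as A. pose proof (Hm t x u 0 0 0 0 0 0 0 0 0) as B.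
    sp A. sp B. rewrite ?G1, ?G2, ?G3a, ?G3b, ?G3c, ?G3d, ?F2, ?F3, ?T1, ?T2a, ?T2b, ?T2c in A, B.
    lra. }
  assert (PhiF : forall t x u, phi t x u = phi 0 0 u).
  { intros. rewrite (dir_const (fun s => phi s x u)); cycle 1.
    - intro s. exact (proj1 (proj2 (Sphi nil) s x u)).
    - intro s. exact (F3 s x u).
    - apply (dir_const (fun s => phi 0 s u)).
      + intro s. exact (proj1 (proj2 (proj2 (Sphi nil) 0 s u))).
      + intro s. exact (P1 0 s u). }
  assert (PhiP : forall t x u, pu phi t x u = pu phi 0 0 u).
  { intros. unfold pu. apply deriv0_ext. intro. apply PhiF. }
  assert (P2a : forall t x u, px (px phi) t x u = 0) by (intros; apply (p0 _ P1)).
  assert (P2b : forall t x u, pu (px phi) t x u = 0) by (intros; apply (p0 _ P1)).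
  assert (P2c : forall t x u, px (pu phi) t x u = 0).
  { intros. unfold px. apply (d_indep _ (pu phi 0 0 u)). intro. apply PhiP. }
  assert (EtaF : forall t x u E H, eta t x u E H = H * (pu phi t x u - pt xi t x u)).
  { intros. pose proof (Hm t x u E H 0 0 0 0 0 0 0) as A.
    sp A. rewrite ?G1, ?G2, ?G3a, ?G3b, ?G3c, ?G3d, ?F2, ?F3, ?T1, ?T2a, ?T2b, ?T2c, ?P1, ?P2a, ?P2b, ?P2c in A.
    lra. }
  assert (QX : forall t x u, qx chi t x u 1 0 = 2 * px (px tau) t x u).
  { intros. unfold qx.
    rewrite (deriv0_ext _ (fun h => 2 * px tau t (x+h) u + (- pt xi t 0 0))).
    - apply deriv0_unique. apply (lim_aff (fun h => px tau t (x+h) u)).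
      exact (deriv0_spec _ (proj1 (proj2 (proj2 (Stau (1%nat::nil)) t x u)))).
    - intro. rewrite ChiF, G3e. ring. }
  assert (QU : forall t x u, qu chi t x u 1 0 = 0).
  { intros. unfold qu. apply (d_indep _ (2*px tau 0 x 0 - pt xi t 0 0)).
    intro. rewrite ChiF, (TauP t x), G3e. ring. }
  assert (PT : forall t x u, pu (pu phi) t x u = 0 /\ px (px tau) t x u = 0).
  { intros. pose proof (Hm t x u 1 0 0 0 0 0 0 0 0) as A.
    pose proof (Hm t x u 1 0 1 0 0 0 0 0 0) as B.
    pose proof (Hm t x u 1 0 (-1) 0 0 0 0 0 0) as C.
    sp A. sp B. sp C.
    rewrite ?G1, ?G2, ?G3a, ?G3b, ?G3c, ?G3d, ?F2, ?F3, ?T1, ?T2a, ?T2b, ?T2c, ?P1, ?P2a, ?P2b, ?P2c,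
      ?QX, ?QU, ?EtaF in A, B, C.
    split; lra. }
  assert (C6 : forall s, pu phi 0 0 s = pu phi 0 0 0).
  { apply (dir_const (fun s => pu phi 0 0 s)).
    - intro s. exact (proj2 (proj2 (proj2 (Sphi (2%nat::nil)) 0 0 s))).
    - intro s. exact (proj1 (PT 0 0 s)). }
  assert (PhiL : forall s, phi 0 0 s = phi 0 0 0 + pu phi 0 0 0 * s).
  { apply (dir_lin (fun s => phi 0 0 s)).
    - intro s. exact (proj2 (proj2 (proj2 (Sphi nil) 0 0 s))).
    - intro s. exact (C6 s). }
  assert (C4 : forall s, px tau 0 s 0 = px tau 0 0 0).
  { apply (dir_const (fun s => px tau 0 s 0)).
    - intro s. exact (proj1 (proj2 (proj2 (Stau (1%nat::nil)) 0 s 0))).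
    - intro s. exact (proj2 (PT 0 s 0)). }
  assert (TauL : forall s, tau 0 s 0 = tau 0 0 0 + px tau 0 0 0 * s).
  { apply (dir_lin (fun s => tau 0 s 0)).
    - intro s. exact (proj1 (proj2 (proj2 (Stau nil) 0 s 0))).
    - intro s. exact (C4 s). }
  assert (QT : forall t, qt chi t 0 0 1 0 = -1 * pt (pt xi) t 0 0).
  { intros. unfold qt.
    rewrite (deriv0_ext _ (fun h => -1 * pt xi (t+h) 0 0 + 2 * px tau 0 0 0)).
    - apply deriv0_unique. apply (lim_aff (fun h => pt xi (t+h) 0 0)).
      exact (deriv0_spec _ (proj1 (proj2 (Sxi (0%nat::nil)) t 0 0))).
    - intro. rewrite ChiF, TauP. ring. }
  assert (B : forall s, pt xi s 0 0 = pt xi 0 0 0).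
  { apply (dir_const (fun s => pt xi s 0 0)).
    - intro s. exact (proj1 (proj2 (Sxi (0%nat::nil)) s 0 0)).
    - intro s. pose proof (QT s). pose proof (F1 s 0 0 1 0). change (pt (pt xi) s 0 0 = 0). lra. }
  assert (XiL : forall s, xi s 0 0 = xi 0 0 0 + pt xi 0 0 0 * s).
  { apply (dir_lin (fun s => xi s 0 0)).
    - intro s. exact (proj1 (proj2 (Sxi nil) s 0 0)).
    - intro s. exact (B s). }
  exists (xi 0 0 0), (tau 0 0 0), (phi 0 0 0), (px tau 0 0 0),
    (2 * px tau 0 0 0 - pt xi 0 0 0), (pu phi 0 0 0).
  repeat split; intros.
  - rewrite XiF, XiL. ring.
  - rewrite TauF, TauL. ring.
  - rewrite PhiF, PhiL. ring.
  - rewrite ChiF, (TauP t x u), C4, (G3e t x u), B. ring.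
  - rewrite EtaF, (PhiP t x u), C6, (G3e t x u), B. ring.
Qed.

Theorem mainTheorem2 :
  forall (xi tau phi : R -> R -> R -> R) (chi eta : R -> R -> R -> R -> R -> R),
    smooth3 xi -> smooth3 tau -> smooth3 phi -> smooth5 chi -> smooth5 eta ->
    (is_equiv_generator xi tau phi chi eta <->
     exists c1 c2 c3 c4 c5 c6 : R,
       (forall t x u, xi t x u = c1 + 2 * c4 * t - c5 * t) /\
       (forall t x u, tau t x u = c2 + c4 * x) /\
       (forall t x u, phi t x u = c3 + c6 * u) /\
       (forall t x u E H, chi t x u E H = c5 * E) /\
       (forall t x u E H, eta t x u E H = - 2 * c4 * H + c5 * H + c6 * H)).
Proof.
  intros xi tau phi chi eta Sxi Stau Sphi Schi Seta. split.
  - apply forward; assumption.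
  - intros (c1 & c2 & c3 & c4 & c5 & c6 & H1 & H2 & H3 & H4 & H5).
    replace xi with (aff3 c1 (2*c4 - c5) 0 0)
      by (do 3 (apply functional_extensionality; intro); rewrite H1; unfold aff3; ring).
    replace tau with (aff3 c2 0 c4 0)
      by (do 3 (apply functional_extensionality; intro); rewrite H2; unfold aff3; ring).
    replace phi with (aff3 c3 0 0 c6)
      by (do 3 (apply functional_extensionality; intro); rewrite H3; unfold aff3; ring).
    replace chi with (aff5 0 0 0 0 c5 0)
      by (fe5; rewrite H4; unfold aff5; ring).
    replace eta with (aff5 0 0 0 0 0 (-2*c4 + c5 + c6))
      by (fe5; rewrite H5; unfold aff5; ring).
    apply backward.
Qed.
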